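(* Let $G$ be a Polish group and let $H\colon G \to [0,\infty]$ be a graded subgroup. Then the following are equivalent: (1) $\inf_{x \in G} H^\circ(x) = 0$; (2) $H$ is continuous; (3) $H$ is upper semi-continuous.
   Context: A graded subgroup of $G$ is a function $H\colon G \to [0,\infty]$ such that $H(1_G) = 0$, $H(x) = H(x^{-1})$ for all $x$, and $H(hg) \leq H(h) + H(g)$ for all $g,h \in G$. The interior $H^\circ$ is the function $H^\circ(x) = \limsup_{y \to x} H(y)$. Here $[0,\infty]$ carries the order topology. *)

(* Defs.v *)
From HB Require Import structures.
From mathcomp Require Import all_boot all_order all_algebra.
From mathcomp Require Import monoid.
From mathcomp Require Import all_classical all_reals all_analysis.
Set Implicit Arguments. Unset Strict Implicit. Unset Printing Implicit Defensive.
Import Order.TTheory GRing.Theory Num.Theory.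
Local Open Scope classical_set_scope.
Local Open Scope ring_scope.

#[short(type="groupTopType")]
HB.structure Definition GroupTop := {G of Group G & Topological G}.

Definition topological_group (G : groupTopType) : Prop :=
  continuous (fun p : G * G => monoid.mul p.1 p.2) /\
  continuous (@monoid.inv G).

Definition separable_space (T : topologicalType) : Prop :=
  exists D : set T, countable D /\ dense D.

Definition completely_metrizable (R : realType) (T : topologicalType) : Prop :=
  exists d : T -> T -> R,
    [/\ (forall x y, 0 <= d x y /\ (d x y = 0 <-> x = y)),
        (forall x y, d x y = d y x),
        (forall x y z, d x z <= d x y + d y z),
        (forall (x : T) (A : set T),
            nbhs x A <-> exists2 e : R, 0 < e & [set y | d x y < e] `<=` A) &
        (forall u : nat -> T,
            (forall e : R, 0 < e -> exists N : nat,
                forall m n : nat, (N <= m)%N -> (N <= n)%N -> d (u m) (u n) < e) ->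
            exists x : T, u @ \oo --> x)].

Definition polish_group (R : realType) (G : groupTopType) : Prop :=
  [/\ topological_group G, separable_space G & completely_metrizable R G].

Local Open Scope ereal_scope.

Definition graded_subgroup (R : realType) (G : groupTopType) (H : G -> \bar R) : Prop :=
  [/\ (forall x, 0 <= H x),
      H monoid.one = 0,
      (forall x, H x = H (monoid.inv x)) &
      (forall g h : G, H (monoid.mul h g) <= H h + H g)].

(* Interior H°(x) = limsup_{y -> x} H(y) = inf_{U nbhd of x} sup_{y in U} H(y). *)
Definition interior_grade (R : realType) (G : topologicalType) (H : G -> \bar R) (x : G)
  : \bar R := limf_esup H (nbhs x).

Definition upper_semicontinuous (R : realType) (T : topologicalType) (f : T -> \bar R) : Prop :=
  forall x (a : R), f x < a%:E ->
    exists2 V, nbhs x V & forall y, V y -> f y < a%:E.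

(* Main.v *)
Require Import Defs.
From HB Require Import structures.
From mathcomp Require Import all_boot all_order all_algebra.
From mathcomp Require Import monoid.
From mathcomp Require Import all_classical all_reals all_analysis.
From mathcomp Require Import lra.
Import Order.TTheory GRing.Theory Num.Theory.
Local Open Scope classical_set_scope.
Local Open Scope ereal_scope.

Lemma rmul_cont (G : groupTopType) (hG : topological_group G) (a x : G) :
  (fun z => monoid.mul z a) @ x --> monoid.mul x a.
Proof.
have hp : (fun z : G => (z, a)) @ x --> (x, a).
  exact: cvg_pair cvg_id (cvg_cst a).
exact: (cvg_comp _ _ hp (proj1 hG (x, a))).
Qed.

Lemma rmul_nbhs (G : groupTopType) (hG : topological_group G) (a x : G) V :
  nbhs (monoid.mul x a) V -> nbhs x (fun z => V (monoid.mul z a)).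
Proof. by move=> hV; apply: (@rmul_cont G hG a x). Qed.

Section S.
Variables (R : realType) (G : groupTopType) (H : G -> \bar R).
Hypothesis hG : topological_group G.
Hypothesis H0 : forall x, 0 <= H x.
Hypothesis H1 : H monoid.one = 0.
Hypothesis Hinv : forall x, H x = H (monoid.inv x).
Hypothesis Hsub : forall g h : G, H (monoid.mul h g) <= H h + H g.

Lemma est1 x z : H z <= H (monoid.mul z (monoid.inv x)) + H x.
Proof. by rewrite -{1}(mulgVK x z); exact: Hsub. Qed.

Lemma est2 x z : H x <= H (monoid.mul z (monoid.inv x)) + H z.
Proof.
rewrite -{1}(mulgVK z x).
have -> : H (monoid.mul z (monoid.inv x)) = H (monoid.mul x (monoid.inv z)).
  by rewrite [RHS]Hinv invgF.
exact: Hsub.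
Qed.

Lemma small_cont :
  (forall e : R, (0 < e)%R -> exists2 V, nbhs monoid.one V & forall w, V w -> H w < e%:E) ->
  continuous H.
Proof.
move=> sm x; change (H @ x --> H x).
have near_x : forall e : R, (0 < e)%R ->
    \forall z \near x, H (monoid.mul z (monoid.inv x)) < e%:E.
  move=> e e0; have [V hV HV] := sm e e0.
  have := @rmul_nbhs G hG (monoid.inv x) x V; rewrite mulgV => /(_ hV).
  by apply: filterS => z /HV.
case hx: (H x) => [r| |].
- apply/fine_cvgP; split.
    apply: filterS (near_x 1%R ltr01) => z hz.
    rewrite ge0_fin_numE //; apply: (le_lt_trans (est1 x z)).
    rewrite hx; apply: lte_add_pinfty; last exact: ltry.
    by apply: (lt_trans hz); exact: ltry.
  apply/cvgrPdist_lt => e e0.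
  apply: filterS (near_x e e0) => z hz /=.
  have ub : H z < e%:E + r%:E.
    apply: (le_lt_trans (est1 x z)); rewrite hx lteD2rE //.
  have fz : H z \is a fin_num.
    rewrite ge0_fin_numE //; apply: (lt_trans ub); exact: ltry.
  have lb : r%:E < e%:E + H z.
    apply: (le_lt_trans (y := H (monoid.mul z (monoid.inv x)) + H z)).
      by rewrite -hx; exact: est2.
    by rewrite lteD2rE.
  move: ub lb; rewrite -(fineK fz) -!EFinD !lte_fin => ub lb.
  rewrite ltr_norml; apply/andP; split.
    by rewrite /=; move: ub lb; set s := fine (H z) => ub lb; lra.
  by rewrite /=; move: ub lb; set s := fine (H z) => ub lb; lra.
- apply/cvgeyPgt => A.
  apply: filterS (near_x 1%R ltr01) => z hz.
  suff -> : H z = +oo by exact: ltry.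
  apply/eqP; rewrite -leye_eq; rewrite leNgt; apply/negP => hzlt.
  have := est2 x z; rewrite hx leNgt => /negP; apply.
  apply: lte_add_pinfty => //; apply: (lt_trans hz); exact: ltry.
- by have := H0 x; rewrite hx.
Qed.

Lemma inf0_small : ereal_inf (range (interior_grade H)) = 0 ->
  forall e : R, (0 < e)%R -> exists2 V, nbhs monoid.one V & forall w, V w -> H w < e%:E.
Proof.
move=> hinf e e0.
have e20 : (0 < e / 2)%R by rewrite divr_gt0.
have : ereal_inf (range (interior_grade H)) < (e / 2)%:E by rewrite hinf lte_fin.
move=> /ereal_inf_lt [_ [x0 _ <-]].
rewrite /interior_grade limf_esupE => /ereal_inf_lt [_ [V hV <-]] hsup.
have HV : forall y, V y -> H y < (e / 2)%:E.
  move=> y Vy; apply: le_lt_trans hsup; apply: ereal_sup_ubound; by exists y.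
exists (fun w => V (monoid.mul w x0)).
  by apply: (@rmul_nbhs G hG x0 monoid.one); rewrite mul1g.
move=> w Vw.
rewrite -(mulgK x0 w).
apply: (le_lt_trans (Hsub _ _)); rewrite -Hinv.
rewrite [e in e%:E](splitr e) EFinD.
apply: lteD; first exact: HV.
by apply: HV; exact: nbhs_singleton.
Qed.

Lemma cont_usc : continuous H -> upper_semicontinuous H.
Proof.
move=> hc x a hxa.
exists (H @^-1` [set y | y < a%:E]) => // .
apply: (hc x); apply: open_nbhs_nbhs; split => //.
exact: open_ereal_lt_ereal.
Qed.

Lemma usc_inf0 : upper_semicontinuous H -> ereal_inf (range (interior_grade H)) = 0.
Proof.
move=> hu; apply/eqP; rewrite eq_le; apply/andP; split.
  apply/lee_addgt0Pr => e e0; rewrite add0e.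
  have [V hV HV] := hu monoid.one e (ltac:(by rewrite H1 lte_fin)).
  apply: (@le_trans _ _ (interior_grade H monoid.one)).
    by apply: ereal_inf_lbound; exists monoid.one.
  rewrite /interior_grade limf_esupE.
  apply: (@le_trans _ _ (ereal_sup (H @` V))).
    by apply: ereal_inf_lbound; exists V.
  apply: ge_ereal_sup => _ [y Vy <-]; apply: ltW; exact: HV.
apply: le_ereal_inf_tmp => _ [x _ <-].
apply: limf_esup_ge0 => //; exact: filter_not_empty.
Qed.
End S.

Theorem lemma3p9 (R : realType) (G : groupTopType) (H : G -> \bar R) :
  polish_group R G -> graded_subgroup H ->
  [/\ (ereal_inf (range (interior_grade H)) = 0 <-> continuous H),
      (continuous H <-> upper_semicontinuous H) &
      (upper_semicontinuous H <-> ereal_inf (range (interior_grade H)) = 0)].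
Proof.
move=> [hG _ _] [H0 H1 Hinv Hsub].
have AB := fun h => @small_cont R G H hG H0 Hinv Hsub (@inf0_small R G H hG Hinv Hsub h).
have BC := @cont_usc R G H.
have CA := @usc_inf0 R G H H0 H1.
split; split => //; [move=> /BC/CA | move=> /CA/AB | move=> /AB].
all: by [].
Qed.
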